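(* Let $f:\mathbb R^p\to\mathbb R^p$ be a continuous function of the form $f(x)=\sum_{\ell=1}^L\mathbf 1\{x\in\mathscr X^{(\ell)}\}(\phi^{(\ell)}+\Phi^{(\ell)}x)$, where $\{\mathscr X^{(\ell)}\}_{\ell=1}^L$ is a partition of $\mathbb R^p$ into convex sets, $\phi^{(\ell)}\in\mathbb R^p$ and $\Phi^{(\ell)}\in\mathbb R^{p\times p}$. Then: (1) for every $x',x''\in\mathbb R^p$ there exists $\Phi\in\operatorname{co}\{\Phi^{(\ell)}\}_{\ell=1}^L$ such that $f(x'')-f(x')=\Phi(x''-x')$; (2) if $f$ is invertible, then the sets $\mathscr Y^{(\ell)}\defeq f(\mathscr X^{(\ell)})$ partition $\mathbb R^p$ and $f^{-1}(y)=\sum_{\ell=1}^L\mathbf 1\{y\in\mathscr Y^{(\ell)}\}(\Phi^{(\ell)})^{-1}(y-\phi^{(\ell)})$. Suppose further that there exist $a\in\mathbb R^p\setminus\{0\}$ and thresholds $-\infty=\tau_0<\tau_1<\dots<\tau_L=+\infty$ with $\mathscr X^{(\ell)}=\{x\in\mathbb R^p:a^\top x\in(\tau_{\ell-1},\tau_\ell]\}$. Then: (3) if $f$ is invertible, $f^{-1}(y)=\sum_{\ell=1}^L\mathbf 1\{b^\top y\in(\nu_{\ell-1},\nu_\ell]\}(\Phi^{(\ell)})^{-1}(y-\phi^{(\ell)})$, where $b^\top\defeq a^\top(\Phi^{(1)})^{-1}$ and $\nu_\ell\defeq\frac{\det\Phi^{(\ell)}}{\det\Phi^{(1)}}\tau_\ell+a^\top(\Phi^{(1)})^{-1}\phi^{(\ell)}$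 for $\ell\in\{0,\dots,L\}$.
   Context: $\operatorname{co}$ denotes the convex hull. In parts (2)–(3), the formulas involve $(\Phi^{(\ell)})^{-1}$; the conventions $\pm\infty$ times positive scalars plus finite constants are $\pm\infty$. *)

(* Defs.v *)
From HB Require Import structures.
From mathcomp Require Import all_boot all_order all_algebra.
From mathcomp Require Import all_classical all_reals all_analysis.
Set Implicit Arguments. Unset Strict Implicit. Unset Printing Implicit Defensive.
Import Order.TTheory GRing.Theory Num.Theory.
Import numFieldNormedType.Exports.
Local Open Scope classical_set_scope.
Local Open Scope ring_scope.

(* Pieces are indexed by l in {1, ..., L}, as in the paper. *)

Definition is_partition (T : Type) (L : nat) (X : nat -> set T) : Prop :=
  (forall x, exists l, (1 <= l <= L)%N /\ X l x) /\
  (forall l m, (1 <= l <= L)%N -> (1 <= m <= L)%N -> l <> m ->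
     X l `&` X m = set0).

Definition in_conv_hull (R : realType) (p L : nat) (Phi : nat -> 'M[R]_p)
    (M : 'M[R]_p) : Prop :=
  exists w : nat -> R,
    (forall l, (1 <= l <= L)%N -> 0 <= w l) /\
    \sum_(1 <= l < L.+1) w l = 1 /\
    M = \sum_(1 <= l < L.+1) w l *: Phi l.

Definition dotv (R : realType) (p : nat) (a x : 'cV[R]_p) : R :=
  (a^T *m x) ord0 ord0.

Definition nu_thr (R : realType) (p L : nat) (a : 'cV[R]_p)
    (phi : nat -> 'cV[R]_p) (Phi : nat -> 'M[R]_p) (tau : nat -> \bar R)
    (l : nat) : \bar R :=
  if l == 0%N then -oo%E
  else if l == L then +oo%E
  else ((\det (Phi l) / \det (Phi 1%N)) * fine (tau l)
        + dotv a (invmx (Phi 1%N) *m phi l))%:E.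

(* Main.v *)
Require Import Defs.
From HB Require Import structures.
From mathcomp Require Import all_boot all_order all_algebra.
From mathcomp Require Import all_classical all_reals all_analysis.
Import Order.TTheory GRing.Theory Num.Theory.
Import numFieldNormedType.Exports.
Local Open Scope classical_set_scope.
Local Open Scope ring_scope.

From mathcomp Require Import zify ring lra.
Set Implicit Arguments. Unset Strict Implicit. Unset Printing Implicit Defensive.


Lemma vanish_closure (R : realType) (V : normedModType R) (h : R -> V)
  (E : set R) x : continuous h -> (forall u, E u -> h u = 0) ->
  closure E x -> h x = 0.
Proof.
move=> ch h0 Ex.
have ck : continuous (fun u => `|h u|).
  by move=> u; apply: continuous_comp; [exact: ch|exact: norm_continuous].
have cl : closed ((fun u => `|h u|) @^-1` [set y : R | y = 0]).
  have := (continuous_closedP _).1 ck; apply; exact: closed_eq.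
have : closure E `<=` (fun u => `|h u|) @^-1` [set y : R | y = 0].
  rewrite [X in _ `<=` X](closure_id _).1 //; apply: closureS.
  by move=> u /h0 /= ->; rewrite normr0.
by move=> /(_ x Ex) /= /normr0_eq0.
Qed.

Lemma vanish_sup (R : realType) (V : normedModType R) (h : R -> V)
  (E : set R) : continuous h -> (forall u, E u -> h u = 0) ->
  E !=set0 -> has_ubound E -> h (sup E) = 0.
Proof.
move=> ch h0 E0 Eb; apply: (vanish_closure ch h0); exact: closure_sup.
Qed.

Lemma vanish_inf (R : realType) (V : normedModType R) (h : R -> V)
  (E : set R) : continuous h -> (forall u, E u -> h u = 0) ->
  E !=set0 -> has_lbound E -> h (inf E) = 0.
Proof.
move=> ch h0 [e Ee] [b Eb].
rewrite /inf.
have := @vanish_sup R V (fun u => h (- u)) (-%R @` E).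
apply.
- move=> u; apply: continuous_comp; last exact: ch.
  exact: continuousN (fun t => t) u (fun A hA => hA).
- by move=> _ [u Eu <-]; rewrite opprK h0.
- by exists (- e), e.
- exists (- b) => _ [u Eu <-]; rewrite lerNl opprK; exact: Eb.
Qed.



Lemma sum_pick (R : pzRingType) (V : lmodType R) L (c : nat -> R) (F : nat -> V) l :
  (1 <= l <= L)%N -> c l = 1 ->
  (forall m, (1 <= m <= L)%N -> m != l -> c m = 0) ->
  \sum_(1 <= m < L.+1) c m *: F m = F l.
Proof.
move=> lL cl c0.
rewrite (bigD1_seq l) /=; last exact: iota_uniq.
  rewrite cl scale1r big1_seq ?addr0 // => m /andP[ml].
  by rewrite mem_index_iota ltnS => /c0 -> //; rewrite scale0r.
by rewrite mem_index_iota ltnS.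
Qed.

Lemma sum_delta (R : pzRingType) (V : lmodType R) L (F : nat -> V) l (k : R) :
  (1 <= l <= L)%N ->
  \sum_(1 <= m < L.+1) ((m == l)%:R * k) *: F m = k *: F l.
Proof.
move=> lL; rewrite -(@sum_pick R V L (fun m => (m == l)%:R) (fun m => k *: F m) l) //.
- by apply: eq_bigr => m _; rewrite scalerA.
- by rewrite eqxx.
- by move=> m _ /negPf ->.
Qed.

Lemma sum_deltaR (R : pzRingType) L l (k : R) :
  (1 <= l <= L)%N ->
  \sum_(1 <= m < L.+1) ((m == l)%:R * k) = k.
Proof.
move=> lL; have := @sum_delta R R^o L (fun _ => 1) l k lL.
by rewrite /= => H; rewrite -[RHS]mulr1 -[RHS]H; apply: eq_bigr => m _; rewrite /GRing.scale /= mulr1.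
Qed.



Lemma mid_in (R : realType) (s t : R) : s < t -> s < (s + t) / 2 < t.
Proof. by move=> st; have [-> ->] := midf_lt st. Qed.

Lemma tele (V : zmodType) (B C D E : V) : B - C = B - D + (D - E) + (E - C).
Proof. by rewrite !addrA !subrK. Qed.

Section seg.
Variables (R : realType) (p L : nat) (X : nat -> set 'cV[R]_p) (phi : nat -> 'cV[R]_p)
  (Phi : nat -> 'M[R]_p) (f : 'cV[R]_p -> 'cV[R]_p).
Hypothesis cf : continuous f.
Hypothesis fX : forall l x, (1 <= l <= L)%N -> X l x -> f x = phi l + Phi l *m x.

Lemma cont_line (x0 v : 'cV[R]_p) : continuous (fun u : R => x0 + u *: v).
Proof.
move=> u; apply: cvgD; first exact: cvg_cst.
by apply: cvgZr_tmp => A hA.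
Qed.

Lemma affine_closure l x0 v (E : set R) : (1 <= l <= L)%N ->
  (forall u, E u -> X l (x0 + u *: v)) -> E !=set0 ->
  (has_ubound E -> f (x0 + sup E *: v) = phi l + Phi l *m x0 + sup E *: (Phi l *m v)) /\
  (has_lbound E -> f (x0 + inf E *: v) = phi l + Phi l *m x0 + inf E *: (Phi l *m v)).
Proof.
move=> lL EX E0.
pose h u := f (x0 + u *: v) - (phi l + Phi l *m x0 + u *: (Phi l *m v)).
have ch : continuous h.
  move=> u; apply: cvgB.
    by apply: continuous_comp; [exact: cont_line | exact: cf].
  exact (@cont_line (phi l + Phi l *m x0) (Phi l *m v) u).
have h0 : forall u, E u -> h u = 0.
  move=> u Eu; rewrite /h (fX lL (EX u Eu)) mulmxDr -scalemxAr addrA subrr //.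
split=> Eb.
  by apply/eqP; rewrite -subr_eq0; apply/eqP; exact: (vanish_sup ch h0 E0 Eb).
by apply/eqP; rewrite -subr_eq0; apply/eqP; exact: (vanish_inf ch h0 E0 Eb).
Qed.

Lemma seg x0 v n : forall (K : seq nat), (size K <= n)%N -> forall s t, s <= t ->
  (forall u, s < u < t -> exists l, [/\ l \in K, (1 <= l <= L)%N & X l (x0 + u *: v)]) ->
  exists w : nat -> R, [/\ forall l, 0 <= w l, \sum_(1 <= l < L.+1) w l = t - s &
    f (x0 + t *: v) - f (x0 + s *: v) = (\sum_(1 <= l < L.+1) w l *: Phi l) *m v].
Proof.
elim: n => [|n IH] K sK s t st cov;
  (have [<-|st'] := eqVneq s t;
   [exists (fun => 0); split=> //; [by rewrite big1 ?subrr |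
     by rewrite subrr big1 ?mul0mx // => *; rewrite scale0r] | ]);
  have slt : s < t by rewrite lt_neqAle st' st.
  have [l [lK _ _]] := cov ((s + t) / 2) (mid_in slt).
  by move: sK; rewrite leqn0 => /nilP Kn; rewrite Kn in lK.
have [l [lK lL Xl]] := cov ((s + t) / 2) (mid_in slt).
pose E := [set u | s <= u <= t /\ X l (x0 + u *: v)].
have Emid : E ((s + t) / 2).
  by split => //; case/andP: (mid_in slt) => /ltW -> /ltW ->.
have E0 : E !=set0 by exists ((s + t) / 2).
have Eub : has_ubound E by exists t => u [/andP[_ ?]].
have Elb : has_lbound E by exists s => u [/andP[? _]].
have sa : s <= inf E by apply: lb_le_inf E0 _ => u [/andP[? _]].
have bt : sup E <= t by apply: ge_sup E0 _ => u [/andP[_ ?]].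
have ab : inf E <= sup E.
  apply: (@le_trans _ _ ((s + t) / 2)); first exact: ge_inf Elb _ Emid.
  exact: ub_le_sup Eub _ Emid.
pose K' := seq.filter (predC1 l) K.
have sK' : (size K' <= n)%N.
  have := count_predC (predC1 l) K; rewrite -size_filter -/K'.
  have : (0 < count (predC (predC1 l)) K)%N.
    rewrite -has_count; apply/hasP; exists l => //=; by rewrite negbK.
  move: sK; rewrite -/K'. move: (size K') (count _ K) (size K) => a b c; lia.
have [w1 [w1p w1s w1f]] : exists w : nat -> R, [/\ forall l, 0 <= w l,
    \sum_(1 <= l < L.+1) w l = inf E - s &
    f (x0 + inf E *: v) - f (x0 + s *: v) = (\sum_(1 <= l < L.+1) w l *: Phi l) *m v].
  apply: (IH K' sK' s (inf E) sa) => u /andP[su ua].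
  have suP : s < u < t by rewrite su /= (lt_le_trans ua) // (le_trans ab bt).
  have [m [mK mL Xm]] := cov u suP.
  exists m; split => //; rewrite mem_filter mK andbT /=.
  apply/eqP => ml; subst m.
  have Eu : E u by split => //; rewrite (ltW su) /=
    (le_trans (ltW ua)) // (le_trans ab bt).
  have := ge_inf Elb Eu.
  by rewrite leNgt ua.
have [w2 [w2p w2s w2f]] : exists w : nat -> R, [/\ forall l, 0 <= w l,
    \sum_(1 <= l < L.+1) w l = t - sup E &
    f (x0 + t *: v) - f (x0 + sup E *: v) = (\sum_(1 <= l < L.+1) w l *: Phi l) *m v].
  apply: (IH K' sK' (sup E) t bt) => u /andP[bu ut].
  have suP : s < u < t by rewrite ut andbT (le_lt_trans _ bu) // (le_trans sa ab).
  have [m [mK mL Xm]] := cov u suP.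
  exists m; split => //; rewrite mem_filter mK andbT /=.
  apply/eqP => ml; subst m.
  have Eu : E u by split => //; rewrite (ltW ut) andbT
    (le_trans _ (ltW bu)) // (le_trans sa ab).
  have := ub_le_sup Eub Eu.
  by rewrite leNgt bu.
have [fb fa] := @affine_closure l x0 v E lL (fun u (Eu : E u) => Eu.2) E0.
exists (fun m => w1 m + w2 m + (m == l)%:R * (sup E - inf E)); split.
- move=> m; rewrite !addr_ge0 // mulr_ge0 // ?subr_ge0 //.
- rewrite !big_split /= w1s w2s sum_deltaR //; ring.
- under eq_bigr do rewrite !scalerDl.
  have mid : f (x0 + sup E *: v) - f (x0 + inf E *: v) = (sup E - inf E) *: (Phi l *m v).
    by rewrite (fb Eub) (fa Elb) scalerBl opprD addrACA subrr add0r.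
  rewrite !big_split /= sum_delta // !mulmxDl -scalemxAl.
  rewrite (@tele _ _ _ (f (x0 + sup E *: v)) (f (x0 + inf E *: v))) w1f w2f mid.
  by rewrite addrC addrA.
Qed.
End seg.



Section LA.
Variables (R : realType) (p : nat).
Implicit Types (a x y w : 'cV[R]_p).

Lemma dotvD a x y : dotv a (x + y) = dotv a x + dotv a y.
Proof. by rewrite /dotv mulmxDr mxE. Qed.

Lemma dotvZ a c x : dotv a (c *: x) = c * dotv a x.
Proof. by rewrite /dotv -scalemxAr mxE. Qed.

Lemma dotvN a x : dotv a (- x) = - dotv a x.
Proof. by rewrite /dotv mulmxN mxE. Qed.

Lemma dotvB a x y : dotv a (x - y) = dotv a x - dotv a y.
Proof. by rewrite dotvD dotvN. Qed.

Lemma dotv_gt0 a : a != 0 -> 0 < dotv a a.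
Proof.
move=> a0; rewrite /dotv mxE.
have h : forall i : 'I_p, true -> 0 <= a^T 0 i * a i 0.
  by move=> i _; rewrite mxE -expr2 sqr_ge0.
rewrite lt_def sumr_ge0 ?andbT //; apply/negP => /eqP /(psumr_eq0P h) H.
case/negP: a0; apply/eqP/matrixP => i j; rewrite (ord1 j) mxE.
by have := H i isT; rewrite mxE => /eqP; rewrite mulf_eq0 orbb => /eqP.
Qed.

Lemma mxcolP (A B : 'M[R]_p) : (forall y : 'cV[R]_p, A *m y = B *m y) -> A = B.
Proof.
move=> H; apply/matrixP => i j.
have := congr1 (fun M : 'cV[R]_p => M i 0) (H (delta_mx j 0)). by rewrite -!colE !mxE => ->.
Qed.

Lemma trmul_scalar a y : a^T *m y = (dotv a y)%:M.
Proof. by apply/matrixP => i j; rewrite (ord1 i) (ord1 j) [RHS]mxE eqxx mulr1n. Qed.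

Lemma rank1_mul w a y : (w *m a^T) *m y = dotv a y *: w.
Proof. by rewrite -mulmxA trmul_scalar mul_mx_scalar. Qed.

Lemma det_rank1 w a : \det (1%:M + w *m a^T) = 1 + dotv a w.
Proof.
pose M := block_mx (1%:M : 'M[R]_p) (- w) a^T (1%:M : 'M[R]_1).
have e1 : M = block_mx (1%:M + w *m a^T) (- w) 0 1%:M *m block_mx 1%:M 0 a^T 1%:M.
  by rewrite mulmx_block !mulmx0 !mul0mx !mulmx1 !mul1mx !add0r mulNmx addrK.
have e2 : M = block_mx 1%:M 0 a^T 1%:M *m block_mx 1%:M (- w) 0 (1%:M + a^T *m w).
  by rewrite mulmx_block !mulmx0 !mul0mx !mulmx1 !mul1mx !addr0 mulmxN addrCA addNr addr0.
have := congr1 determinant (etrans (esym e1) e2).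
rewrite !det_mulmx det_ublock det_lblock !det1 !mulr1 !mul1r det_ublock det1 mul1r.
by move=> ->; rewrite det_mx11 trmul_scalar !mxE /=.
Qed.
End LA.



Section ER.
Variable R : realType.
Local Open Scope ereal_scope.

Lemma gap_up (t : R) (hi : \bar R) : t%:E < hi -> exists2 d : R, (0 < d)%R & (t + d)%:E <= hi.
Proof.
case: hi => [h| |] //.
- by rewrite lte_fin => th; exists (h - t)%R; [rewrite subr_gt0 | rewrite addrC subrK].
- by move=> _; exists 1%R => //; rewrite leey.
Qed.

Lemma gap_dn (t : R) (lo : \bar R) : lo < t%:E -> exists2 d : R, (0 < d)%R & lo < (t - d)%:E.
Proof.
case: lo => [h| |] //.
- rewrite lte_fin => th; exists ((t - h) / 2)%R; first by rewrite divr_gt0 // subr_gt0.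
  by rewrite lte_fin; lra.
- by move=> _; exists 1%R => //; rewrite ltNyr.
Qed.

Lemma two_pts (lo hi : \bar R) : lo < hi ->
  exists r1 r2 : R, [/\ (r1 < r2)%R, lo < r1%:E & r2%:E <= hi].
Proof.
case: hi => [h| |] //.
- move=> /gap_dn [d d0 lod]; exists (h - d)%R, h; split => //; first lra.
- case: lo => [l| |] // _.
  + by exists (l + 1)%R, (l + 2)%R; rewrite !lte_fin leey; split => //; lra.
  + by exists 0%R, 1%R; rewrite ltNyr leey; split => //; rewrite ltr01.
- by rewrite ltNge leNye.
Qed.

Lemma eps_pick (t k : R) (lo hi : \bar R) : lo < t%:E -> t%:E < hi -> (k <= 0)%R ->
  exists2 e : R, (0 < e)%R & (t + e)%:E <= hi /\ lo < (t + e * k)%:E.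
Proof.
move=> /gap_dn [d2 d20 lod] /gap_up [d1 d10 dhi] k0.
exists (Num.min d1 (d2 / (1 - k)))%R.
  by rewrite lt_min d10 divr_gt0 //; lra.
split.
  apply: le_trans dhi; rewrite lee_fin lerD2l ge_min lexx //.
apply: (lt_le_trans lod); rewrite lee_fin.
have h1 : (Num.min d1 (d2 / (1 - k)) <= d2 / (1 - k))%R by rewrite ge_min lexx orbT.
have h2 : (0 < Num.min d1 (d2 / (1 - k)))%R by rewrite lt_min d10 divr_gt0 //; lra.
move: h1 h2; set e := Num.min _ _ => h1 h2.
have h3 : (e * (1 - k) <= d2)%R by rewrite -ler_pdivlMr //; lra.
nra.
Qed.
End ER.





Lemma zm1 (V : zmodType) (x y z w : V) : x + y = z + w -> w - y = x - z.
Proof. by move=> e; apply/eqP; rewrite subr_eq addrAC e addrAC subrr add0r. Qed.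

Section P3.
Variables (R : realType) (p L : nat) (X : nat -> set 'cV[R]_p) (phi : nat -> 'cV[R]_p)
  (Phi : nat -> 'M[R]_p) (f g : 'cV[R]_p -> 'cV[R]_p) (a : 'cV[R]_p) (tau : nat -> \bar R).
Hypothesis cf : continuous f.
Hypothesis fX : forall l x, (1 <= l <= L)%N -> X l x -> f x = phi l + Phi l *m x.
Hypothesis fg : cancel f g.
Hypothesis a0 : a != 0.
Hypothesis L0 : (0 < L)%N.
Hypothesis t0 : tau 0%N = -oo%E.
Hypothesis tL : tau L = +oo%E.
Hypothesis tfin : forall l, (0 < l < L)%N -> tau l \is a fin_num.
Hypothesis tinc : forall l, (l < L)%N -> (tau l < tau l.+1)%E.
Hypothesis Xdef : forall l, (1 <= l <= L)%N ->
  X l = [set x | (tau l.-1 < (dotv a x)%:E)%E /\ ((dotv a x)%:E <= tau l)%E].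

Let finj := can_inj fg.
Definition ap : 'cV[R]_p := (dotv a a)^-1 *: a.

Lemma dotv_ap1 : dotv a ap = 1.
Proof. by rewrite /ap dotvZ mulVf // gt_eqF // dotv_gt0. Qed.

Lemma dotv_ap c : dotv a (c *: ap) = c.
Proof. by rewrite dotvZ dotv_ap1 mulr1. Qed.

Lemma XP l x : (1 <= l <= L)%N -> X l x <->
  ((tau l.-1 < (dotv a x)%:E)%E /\ ((dotv a x)%:E <= tau l)%E).
Proof. by move=> lL; rewrite Xdef. Qed.

Lemma tauE l : (0 < l < L)%N -> tau l = (fine (tau l))%:E.
Proof. by move=> /tfin /fineK. Qed.

Lemma tinc' l : (1 <= l <= L)%N -> (tau l.-1 < tau l)%E.
Proof. by move=> /andP[l1 lL]; have := tinc (l:=l.-1); rewrite prednK //; apply; lia. Qed.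

Lemma unit_Phi l : (1 <= l <= L)%N -> Phi l \in unitmx.
Proof.
move=> lL.
have [r1 [r2 [r12 lo hi]]] := two_pts (tinc' lL).
rewrite unitmxE unitfE -det_tr; apply/negP => /det0P [v v0 vP].
pose w := v^T.
have Pw : Phi l *m w = 0 by rewrite /w -[Phi l]trmxK -trmx_mul vP trmx0.
have w0 : w != 0 by rewrite /w trmx_eq0.
pose k := dotv a w.
pose w' := if k == 0 then w else ((r2 - r1) / k) *: w.
have Pw' : Phi l *m w' = 0.
  by rewrite /w'; case: ifP => _; rewrite ?Pw // -scalemxAr Pw scaler0.
have w'0 : w' != 0.
  rewrite /w'; case: ifP => k0 //; rewrite scaler_eq0 negb_or w0 andbT.
  by rewrite mulf_neq0 ?invr_eq0 ?k0 // subr_eq0 gt_eqF.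
have dw' : dotv a w' = 0 \/ dotv a w' = r2 - r1.
  by rewrite /w'; case: ifP => /eqP k0; [left | right; rewrite dotvZ -/k divfK //; apply/eqP].
pose x1 := r1 *: ap; pose x2 := x1 + w'.
have X1 : X l x1.
  by apply/XP => //; rewrite dotv_ap; split => //; apply: le_trans hi; rewrite lee_fin ltW.
have X2 : X l x2.
  apply/XP => //; rewrite dotvD dotv_ap; case: dw' => ->; split.
  - by rewrite addr0.
  - by rewrite addr0; apply: le_trans hi; rewrite lee_fin ltW.
  - by rewrite addrC subrK (lt_trans lo) // lte_fin.
  - by rewrite addrC subrK.
have : f x1 = f x2 by rewrite (fX lL X1) (fX lL X2) /x2 mulmxDr Pw' addr0.
move/finj/(congr1 (fun z => z - x1)); rewrite subrr /x2 [x1 + w']addrC addrK => w'e.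
by move: w'0; rewrite -w'e eqxx.
Qed.

Lemma bnd l x : (1 <= l < L)%N -> dotv a x = fine (tau l) ->
  phi l + Phi l *m x = phi l.+1 + Phi l.+1 *m x.
Proof.
move=> /andP[l1 lL] dx.
have tl := @tauE l (ltac:(by rewrite l1 lL)).
have lL' : (1 <= l <= L)%N by rewrite l1 ltnW.
have lL1 : (1 <= l.+1 <= L)%N by rewrite lL.
have lf : tau l \is a fin_num by apply: tfin; rewrite l1 lL.
have Xl : X l x by apply/XP => //; rewrite dx fineK //; split => //; exact: tinc'.
rewrite -(fX lL' Xl).
have [d d0 dhi] : exists2 d : R, 0 < d & ((fine (tau l) + d)%:E <= tau l.+1)%E.
  by apply: gap_up; rewrite fineK //; exact: tinc.
pose E := [set` `]0, d]] : set R.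
have EX : forall u, E u -> X l.+1 (x + u *: ap).
  move=> u; rewrite /E /= in_itv /= => /andP[u0 ud]; apply/XP => //=.
  rewrite dotvD dotv_ap dx /= -[X in (X < _)%E](fineK lf); split; first by rewrite lte_fin ltrDl.
  by apply: le_trans dhi; rewrite lee_fin lerD2l.
have E0 : E !=set0 by exists d; rewrite /E /= in_itv /= d0 lexx.
have [_ Hinf] := affine_closure cf fX lL1 EX E0.
have Elb : has_lbound E by exists 0 => u; rewrite /E /= in_itv /= => /andP[/ltW].
have := Hinf Elb; rewrite inf_itv ?bnd_simp // !scale0r !addr0 => ->; reflexivity.
Qed.

Definition dd l := (Phi l.+1 - Phi l) *m ap.

Lemma rank1 l : (1 <= l < L)%N -> Phi l.+1 = Phi l + dd l *m a^T.
Proof.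
move=> lL; apply: mxcolP => y.
set t := fine (tau l).
have H : forall x, dotv a x = t -> (Phi l.+1 - Phi l) *m x = phi l - phi l.+1.
  by move=> x /(bnd lL) e; rewrite mulmxBl; apply: zm1.
have Hz : (Phi l.+1 - Phi l) *m (y - dotv a y *: ap) = 0.
  have e1 := H (t *: ap) (dotv_ap t).
  have e2 := H (t *: ap + (y - dotv a y *: ap)) (ltac:(by rewrite dotvD dotvB !dotv_ap subrr addr0)).
  have := @mulmxDr R p p 1 (Phi l.+1 - Phi l) (t *: ap) (y - dotv a y *: ap).
  by move=> E; move: e2; rewrite E e1 -[RHS]addr0 => /addrI.
move: Hz; rewrite mulmxBr => /eqP; rewrite subr_eq0 => /eqP Dy.
rewrite mulmxDl rank1_mul /dd scalemxAr -Dy mulmxBl.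
by rewrite addrC subrK.
Qed.

Definition rr l := \det (Phi l) / \det (Phi 1%N).
Definition bt (y : 'cV[R]_p) := dotv a (invmx (Phi 1%N) *m y).
Definition kk l := 1 + dotv a (invmx (Phi l) *m dd l).

Lemma btD y z : bt (y + z) = bt y + bt z.
Proof. by rewrite /bt mulmxDr dotvD. Qed.

Lemma det_neq0 l : (1 <= l <= L)%N -> \det (Phi l) != 0.
Proof. by move=> /unit_Phi; rewrite unitmxE unitfE. Qed.

Lemma rr_step l : (1 <= l < L)%N -> rr l.+1 = rr l * kk l.
Proof.
move=> lL; have lL' : (1 <= l <= L)%N by case/andP: lL => -> /ltnW.
have uP := unit_Phi lL'.
have e : Phi l.+1 = Phi l *m (1%:M + (invmx (Phi l) *m dd l) *m a^T).
  by rewrite rank1 // mulmxDr mulmx1 !mulmxA mulmxV // mul1mx.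
rewrite /rr e det_mulmx det_rank1 /kk; ring.
Qed.

Lemma key l : (1 <= l <= L)%N -> a^T *m invmx (Phi 1%N) *m Phi l = rr l *: a^T.
Proof.
elim: l => [//|l IH] lL.
have [->|l0] := eqVneq l 0%N.
  rewrite mulmxKV ?unit_Phi // /rr divff ?scale1r //; exact: det_neq0.
have lL1 : (1 <= l < L)%N by move: lL l0; lia.
have lL' : (1 <= l <= L)%N by move: lL l0; lia.
rewrite (rank1 lL1) mulmxDr (IH lL') mulmxA -(mulmxA _ _ (dd l)) trmul_scalar.
rewrite mul_scalar_mx -scalerDl rr_step //; congr (_ *: _).
have -> : invmx (Phi 1%N) *m dd l
    = invmx (Phi 1%N) *m (Phi l *m (invmx (Phi l) *m dd l)).
  by rewrite mulKVmx // unit_Phi.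
have h : forall z, dotv a (invmx (Phi 1%N) *m (Phi l *m z)) = rr l * dotv a z.
  by move=> z; rewrite /dotv !mulmxA (IH lL') -scalemxAl mxE.
rewrite h /kk; ring.
Qed.

Lemma bt_Phi l z : (1 <= l <= L)%N -> bt (Phi l *m z) = rr l * dotv a z.
Proof. by move=> lL; rewrite /bt /dotv !mulmxA key // -scalemxAl mxE. Qed.

Lemma kk_pos l : (1 <= l < L)%N -> 0 < kk l.
Proof.
move=> lL; rewrite ltNge; apply/negP => k0.
have lL' : (1 <= l <= L)%N by case/andP: lL => -> /ltnW.
have lL1 : (1 <= l.+1 <= L)%N by case/andP: lL.
have lf : tau l \is a fin_num by apply: tfin; case/andP: lL => -> ->.
set t := fine (tau l).
have [e e0 [ehi elo]] : exists2 e : R, 0 < e &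
    ((t + e)%:E <= tau l.+1)%E /\ (tau l.-1 < (t + e * kk l)%:E)%E.
  apply: eps_pick => //; rewrite /t fineK //; [exact: tinc' | exact: tinc; case/andP: lL].
pose x0 := t *: ap. pose z2 := e *: ap. pose z1 := e *: (ap + invmx (Phi l) *m dd l).
have X2 : X l.+1 (x0 + z2).
  apply/XP => //=; rewrite dotvD !dotv_ap -[X in (X < _)%E](fineK lf) lte_fin ltrDl e0.
  by split.
have X1 : X l (x0 + z1).
  apply/XP => //; rewrite dotvD dotv_ap /z1 dotvZ dotvD dotv_ap1 -/(kk l); split => //.
  by rewrite -(fineK lf) lee_fin -/t gerDl mulr_ge0_le0 // ltW.
have ff : f (x0 + z1) = f (x0 + z2).
  rewrite (fX lL' X1) (fX lL1 X2) !mulmxDr !addrA (bnd lL (dotv_ap t)); congr (_ + _).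
  rewrite [in RHS](rank1 lL) mulmxDl rank1_mul /z2 dotv_ap /z1 -!scalemxAr mulmxDr.
  by rewrite mulKVmx ?unit_Phi // scalerDr /ap -scalemxAr.
have z12 : z1 = z2 by move/finj/addrI: ff.
have := congr1 (dotv a) z12; rewrite /z1 /z2 !dotvZ dotvD dotv_ap1 -/(kk l) => /(mulfI (lt0r_neq0 e0)) kk1.
have dn : dotv a a != 0 by rewrite gt_eqF // dotv_gt0.
by move: k0; rewrite kk1 mulVf //; lra.
Qed.

Lemma rr_pos l : (1 <= l <= L)%N -> 0 < rr l.
Proof.
elim: l => [//|l IH] lL.
have [->|l0] := eqVneq l 0%N.
  by rewrite /rr divff ?ltr01 //; exact: det_neq0.
have lL1 : (1 <= l < L)%N by move: lL l0; lia.
have lL' : (1 <= l <= L)%N by move: lL l0; lia.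
by rewrite rr_step // mulr_gt0 // ?IH // kk_pos.
Qed.

Lemma cont m : (1 <= m < L)%N ->
  rr m * fine (tau m) + bt (phi m) = rr m.+1 * fine (tau m) + bt (phi m.+1).
Proof.
move=> mL; have mL' : (1 <= m <= L)%N by case/andP: mL => -> /ltnW.
have mL1 : (1 <= m.+1 <= L)%N by case/andP: mL.
have := congr1 bt (bnd mL (dotv_ap (fine (tau m)))).
by rewrite !btD !bt_Phi // !dotv_ap addrC [RHS]addrC.
Qed.

Definition nu := nu_thr L a phi Phi tau.

Lemma nu_mid l : (0 < l < L)%N -> nu l = (rr l * fine (tau l) + bt (phi l))%:E.
Proof.
move=> /andP[l0 lL]; rewrite /nu /nu_thr.
by rewrite (negPf (lt0n_neq0 l0)) (ltn_eqF lL).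
Qed.

Lemma nuL : nu L = +oo%E.
Proof. by rewrite /nu /nu_thr (negPf (lt0n_neq0 L0)) eqxx. Qed.

Lemma nu0 : nu 0 = -oo%E.
Proof. by []. Qed.

Lemma nu_in l x : (1 <= l <= L)%N -> X l x ->
  (nu l.-1 < (bt (f x))%:E)%E /\ ((bt (f x))%:E <= nu l)%E.
Proof.
move=> lL Xl; rewrite (fX lL Xl) btD bt_Phi //.
have [lo hi] := (XP _ lL).1 Xl.
have rp := rr_pos lL.
split.
- have [e1|e1] := eqVneq l.-1 0%N; first by rewrite e1 nu0 ltNyr.
  have mL : (1 <= l.-1 < L)%N by move: lL e1; lia.
  have lf : tau l.-1 \is a fin_num by apply: tfin; move: lL e1; lia.
  rewrite nu_mid; last by move: lL e1; lia.
  rewrite cont // prednK; last by move: lL; lia.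
  move: lo; rewrite -(fineK lf) !lte_fin => lo.
  by rewrite addrC /= ltrD2l ltr_pM2l.
- have [e1|e1] := eqVneq l L; first by rewrite e1 nuL leey.
  have lf : tau l \is a fin_num by apply: tfin; move: lL e1; lia.
  rewrite nu_mid; last by move: lL e1; lia.
  move: hi; rewrite -(fineK lf) !lee_fin => hi.
  by rewrite addrC lerD2r ler_pM2l.
Qed.

Lemma nu_step i : (i < L)%N -> (nu i <= nu i.+1)%E.
Proof.
move=> iL.
have [->|i0] := eqVneq i 0%N; first by rewrite nu0 leNye.
have [e1|e1] := eqVneq i.+1 L; first by rewrite e1 nuL leey.
have iL1 : (1 <= i < L)%N by move: iL i0; lia.
have lf : tau i \is a fin_num by apply: tfin; move: iL i0; lia.
have lf1 : tau i.+1 \is a fin_num by apply: tfin; move: iL e1; lia.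
rewrite !nu_mid; [|by move: iL e1; lia|by move: iL i0; lia].
rewrite cont // lee_fin lerD2r ler_pM2l ?rr_pos; last by move: iL; lia.
have := tinc iL; rewrite -(fineK lf) -(fineK lf1) lte_fin /= => /ltW H.
  exact: H.
by [].
Qed.

Lemma nu_mono i j : (i <= j <= L)%N -> (nu i <= nu j)%E.
Proof.
elim: j => [|j IH] /andP[ij jL]; first by move: ij; rewrite leqn0 => /eqP ->.
have [->|ne] := eqVneq i j.+1; first exact: lexx.
apply: (le_trans (IH _)); first by move: ij jL ne; lia.
exact: nu_step.
Qed.

Lemma part3 (cov : forall x, exists l, (1 <= l <= L)%N /\ X l x) (gf : cancel g f) y :
  g y = \sum_(1 <= l < L.+1)
        \1_([set z | (nu_thr L a phi Phi tau l.-1 < (dotv a (invmx (Phi 1%N) *m z))%:E)%E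
                   /\ ((dotv a (invmx (Phi 1%N) *m z))%:E <= nu_thr L a phi Phi tau l)%E]) y
        *: (invmx (Phi l) *m (y - phi l)).
Proof.
have [l [lL Xl]] := cov (g y).
have yf : y = f (g y) by rewrite gf.
have [lo hi] := nu_in lL Xl; rewrite -yf in lo hi.
rewrite (@sum_pick _ _ _ _ _ l) //.
- rewrite [X in X - phi l]yf (fX lL Xl) addrC addKr mulKmx //; exact: unit_Phi.
- by rewrite indicE mem_set.
- move=> m mL ml; rewrite indicE memNset // => -[lo' hi'].
  have [lm|lm|lm] := ltngtP m l.
  + have : (nu m <= nu l.-1)%E by apply: nu_mono; move: lm lL; lia.
    by move=> H; have := lt_le_trans lo (le_trans hi' H); rewrite ltxx.
  + have : (nu l <= nu m.-1)%E by apply: nu_mono; move: lm mL; lia.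
    by move=> H; have := le_lt_trans (le_trans hi H) lo'; rewrite ltxx.
  + by move: ml; rewrite lm eqxx.
Qed.

End P3.

Theorem lemmaE2 (R : realType) (p L : nat)
    (X : nat -> set 'cV[R]_p) (phi : nat -> 'cV[R]_p) (Phi : nat -> 'M[R]_p)
    (f : 'cV[R]_p -> 'cV[R]_p) :
  continuous f ->
  is_partition L X ->
  (forall l, (1 <= l <= L)%N -> convex_set (X l : set (convex_lmodType 'cV[R]_p))) ->
  (forall x, f x = \sum_(1 <= l < L.+1) \1_(X l) x *: (phi l + Phi l *m x)) ->
  (* (1) *)
  (forall x' x'', exists M, in_conv_hull L Phi M /\ f x'' - f x' = M *m (x'' - x'))
  /\
  (* (2) *)
  (forall g : 'cV[R]_p -> 'cV[R]_p, cancel f g -> cancel g f ->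
     is_partition L (fun l => f @` X l) /\
     ((forall l, (1 <= l <= L)%N -> Phi l \in unitmx) ->
      forall y, g y = \sum_(1 <= l < L.+1)
                       \1_(f @` X l) y *: (invmx (Phi l) *m (y - phi l))))
  /\
  (* (3) *)
  (forall (a : 'cV[R]_p) (tau : nat -> \bar R),
     a != 0 ->
     tau 0%N = -oo%E -> tau L = +oo%E ->
     (forall l, (0 < l < L)%N -> tau l \is a fin_num) ->
     (forall l, (l < L)%N -> (tau l < tau l.+1)%E) ->
     (forall l, (1 <= l <= L)%N ->
        X l = [set x | (tau l.-1 < (dotv a x)%:E)%E /\ ((dotv a x)%:E <= tau l)%E]) ->
     forall g : 'cV[R]_p -> 'cV[R]_p, cancel f g -> cancel g f ->
     forall y, g y = \sum_(1 <= l < L.+1)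
        \1_([set z | (nu_thr L a phi Phi tau l.-1 < (dotv a (invmx (Phi 1%N) *m z))%:E)%E
                   /\ ((dotv a (invmx (Phi 1%N) *m z))%:E <= nu_thr L a phi Phi tau l)%E]) y
        *: (invmx (Phi l) *m (y - phi l))).
Proof.
move=> cf [cov disj] convX fdef.
have fX : forall l x, (1 <= l <= L)%N -> X l x -> f x = phi l + Phi l *m x.
  move=> l x lL Xl; rewrite fdef (@sum_pick _ _ _ _ _ l) //.
  - by rewrite indicE mem_set.
  - move=> m mL ml; rewrite indicE memNset // => Xm.
    have : (X m `&` X l) x by split.
    by rewrite (disj m l mL lL (elimN eqP ml)).
have L0 : (0 < L)%N by have [l [lL _]] := cov 0; move: lL; lia.
split; [|split].
- move=> x' x''.
  have sz : (size (iota 1 L) <= L)%N by rewrite size_iota.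
  have cv : forall u : R, 0 < u < 1 -> exists l, [/\ l \in iota 1 L, (1 <= l <= L)%N
      & X l (x' + u *: (x'' - x'))].
    move=> u _; have [l [lL Xl]] := cov (x' + u *: (x'' - x')).
    by exists l; split => //; rewrite mem_iota; move: lL; lia.
  have [w [wp ws wf]] := @seg R p L X phi Phi f cf fX x' (x'' - x') L (iota 1 L) sz 0 1 ler01 cv.
  exists (\sum_(1 <= l < L.+1) w l *: Phi l); split.
    by exists w; split => // ; rewrite ws subr0.
  by move: wf; rewrite scale1r scale0r addr0 (addrC x') subrK.
- move=> g fg gf; split.
    split.
      move=> y; have [l [lL Xl]] := cov (g y).
      by exists l; split => //; exists (g y) => //; rewrite gf.
    move=> l m lL mL lm; apply/seteqP; split => // y [[x1 X1 e1] [x2 X2 e2]].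
    have ex : x2 = x1 by apply: (can_inj fg); rewrite e1 e2.
    have : (X l `&` X m) x1 by split => //; rewrite -ex.
    by rewrite (disj l m lL mL lm).
  move=> units y.
  have [l [lL Xl]] := cov (g y).
  have yf : y = f (g y) by rewrite gf.
  rewrite (@sum_pick _ _ _ _ _ l) //.
  + by rewrite [X in X - phi l]yf (fX l _ lL Xl) addrC addKr mulKmx // units.
  + by rewrite indicE mem_set //; exists (g y).
  + move=> m mL ml; rewrite indicE memNset // => -[x Xm fx].
    have ex : x = g y by rewrite -fx fg.
    have : (X m `&` X l) (g y) by split => //; rewrite -ex.
    by rewrite (disj m l mL lL (elimN eqP ml)).
- move=> a tau a0 t0 tL tfin tinc Xdef g fg gf y.
  exact: (part3 cf fX fg a0 L0 tfin tinc Xdef cov gf y).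
Qed.
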